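(* Let $n\ge2$, $l\ge1$, $\mathfrak g=A^{(2)}_{2n}$, $B$ the level-$l$ perfect crystal of the context, $\lambda=l\Lambda_0$, $d=2n$, and $i^{(j)}_a=a-1$ for $1\le a\le n+1$, $i^{(j)}_a=2n+1-a$ for $n+2\le a\le 2n$ (all $j\ge1$). Then: (II) $B^{(j)}_d=B$ for all $j\ge1$; (III) $\langle\lambda_j,h_{i^{(j)}_a}\rangle\le\varepsilon_{i^{(j)}_a}(b)$ for all $j\ge1$, $1\le a\le d$, $b\in B^{(j)}_{a-1}$; (IV') for all $j\ge1$, $a=1,\dots,d$: $\varepsilon_{i^{(j)}_{a+1}}(b^{(j)}_a)=0$, $\varphi_{i^{(j)}_{a+1}}(b^{(j)}_a)>0$ (with $i^{(j)}_{d+1}:=i^{(j+1)}_1$), and $b^{(j+1)}_0=\tilde f_{i^{(j+1)}_1}^mb^{(j)}_d$ with $m=\langle\lambda_{j+1},h_{i^{(j+1)}_1}\rangle$. Moreover $B^{(j)}_0=\{(0,\dots,0)\}$, $B^{(j)}_{2n}=B$; for $1\le a\le n$, $B^{(j)}_a$ is the set of $b\in B$ with all coordinates $0$ except possibly $x_1,\dots,x_a$; for $1\le a\le n-1$, $B^{(j)}_{n+a}$ is the set of $b\in B$ with all coordinates $0$ except possibly $x_1,\dots,x_n,\bar x_n,\dots,\bar x_{n-a+1}$. Also $b^{(j)}_0=(0,\dots,0)$, and for $1\le a\le n$, $b^{(j)}_a$ has $x_a=l$ and $b^{(j)}_{n+a}$ has $\bar x_{n-a+1}=l$, all other coordinates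 $0$.
   Context: $(x)_+=\max(x,0)$. $B=\{(x_1,\dots,x_n,\bar x_n,\dots,\bar x_1)\in\mathbb Z^{2n}: x_i,\bar x_i\ge0,\ \sum_{i=1}^n(x_i+\bar x_i)\le l\}$. Crystal structure: $\tilde f_0b=(x_1+1,x_2,\dots,\bar x_1)$ if $x_1\ge\bar x_1$, $(x_1,\dots,\bar x_2,\bar x_1-1)$ if $x_1<\bar x_1$; for $1\le i\le n-1$, $\tilde f_ib$ replaces $(x_i,x_{i+1})$ by $(x_i-1,x_{i+1}+1)$ if $x_{i+1}\ge\bar x_{i+1}$, and $(\bar x_{i+1},\bar x_i)$ by $(\bar x_{i+1}-1,\bar x_i+1)$ if $x_{i+1}<\bar x_{i+1}$; $\tilde f_nb$ replaces $(x_n,\bar x_n)$ by $(x_n-1,\bar x_n+1)$; $\tilde e_ib=b'$ iff $\tilde f_ib'=b$; results outside $B$ mean $0$. With $s(b)=\sum_{i=1}^n(x_i+\bar x_i)$: $\varphi_0(b)=l-s(b)+2(\bar x_1-x_1)_+$, $\varepsilon_0(b)=l-s(b)+2(x_1-\bar x_1)_+$; $\varphi_i(b)=x_i+(\bar x_{i+1}-x_{i+1})_+$, $\varepsilon_i(b)=\bar x_i+(x_{i+1}-\bar x_{i+1})_+$ ($1\le i\le n-1$); $\varphi_n(b)=x_n$, $\varepsilon_n(b)=\bar x_n$. For $\lambda=l\Lambda_0$: $\lambda_j=l\Lambda_0$ and $\overline b_j=(0,\dots,0)$ for all $j$; $\langle\lambda_j,h_i\rangle$ is the coefficient of $\Lambda_i$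 in $\lambda_j$. Given $d$, $i^{(j)}_a$: $B^{(j)}_0=\{\overline b_j\}$, $B^{(j)}_a=\bigcup_{n\ge0}\tilde f_{i^{(j)}_a}^nB^{(j)}_{a-1}\setminus\{0\}$; $b^{(j)}_0=\overline b_j$, $b^{(j)}_a=\tilde f_{i^{(j)}_a}^{\varphi_{i^{(j)}_a}(b^{(j)}_{a-1})}b^{(j)}_{a-1}$. *)

(* Defs.v *)
From mathcomp Require Import all_boot.
Set Implicit Arguments. Unset Strict Implicit. Unset Printing Implicit Defensive.

(* An element b = (x_1,...,x_n, xbar_n,...,xbar_1) is represented as a pair
   (xs, xbs) of sequences with x_i = nth 0 xs (i-1) and xbar_i = nth 0 xbs (i-1). *)
Definition elem := (seq nat * seq nat)%type.

Definition xc (b : elem) (i : nat) : nat := nth 0 b.1 i.-1.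
Definition xbc (b : elem) (i : nat) : nat := nth 0 b.2 i.-1.

Definition sB (b : elem) : nat := sumn b.1 + sumn b.2.

Definition inB (n l : nat) (b : elem) : bool :=
  [&& size b.1 == n, size b.2 == n & sB b <= l].

Definition setx (b : elem) (i v : nat) : elem := (set_nth 0 b.1 i.-1 v, b.2).
Definition setxb (b : elem) (i v : nat) : elem := (b.1, set_nth 0 b.2 i.-1 v).

(* Raw action of \tilde f_i (None when a coordinate would become negative). *)
Definition fraw (n : nat) (i : nat) (b : elem) : option elem :=
  if i == 0 then
    (if xbc b 1 <= xc b 1 then Some (setx b 1 (xc b 1).+1)
     else Some (setxb b 1 (xbc b 1).-1))
  else if i < n then
    (if xbc b i.+1 <= xc b i.+1 then
       (if xc b i == 0 then None
        else Some (setx (setx b i (xc b i).-1) i.+1 (xc b i.+1).+1))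
     else
       (if xbc b i.+1 == 0 then None
        else Some (setxb (setxb b i.+1 (xbc b i.+1).-1) i (xbc b i).+1)))
  else if i == n then
    (if xc b n == 0 then None
     else Some (setxb (setx b n (xc b n).-1) n (xbc b n).+1))
  else None.

(* \tilde f_i on B; None plays the role of 0 (results outside B). *)
Definition ftil (n l i : nat) (b : elem) : option elem :=
  match fraw n i b with
  | Some b' => if inB n l b' then Some b' else None
  | None => None
  end.

Definition fpow (n l i k : nat) (b : elem) : option elem :=
  iter k (fun ob => obind (ftil n l i) ob) (Some b).

(* varphi_i and epsilon_i (natural-number truncated subtraction: (x-y)_+ = x - y;
   l - s(b) >= 0 on B). *)
Definition phi (n l i : nat) (b : elem) : nat :=
  if i == 0 then l - sB b + 2 * (xbc b 1 - xc b 1)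
  else if i < n then xc b i + (xbc b i.+1 - xc b i.+1)
  else if i == n then xc b n else 0.

Definition eps (n l i : nat) (b : elem) : nat :=
  if i == 0 then l - sB b + 2 * (xc b 1 - xbc b 1)
  else if i < n then xbc b i + (xc b i.+1 - xbc b i.+1)
  else if i == n then xbc b n else 0.

Definition lamcoef (l i : nat) : nat := if i == 0 then l else 0.

Definition zeroB (n : nat) : elem := (nseq n 0, nseq n 0).

(* B^{(j)}_a, for the index sequence ii = (a |-> i^{(j)}_a) and start b0 = bbar_j *)
Fixpoint Bset (n l : nat) (ii : nat -> nat) (b0 : elem) (a : nat) (b : elem) : Prop :=
  match a with
  | 0 => b = b0
  | a'.+1 => exists b' k, Bset n l ii b0 a' b' /\ fpow n l (ii a'.+1) k b' = Some b
  end.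

(* b^{(j)}_a (None would mean 0) *)
Fixpoint bseqj (n l : nat) (ii : nat -> nat) (b0 : elem) (a : nat) : option elem :=
  match a with
  | 0 => Some b0
  | a'.+1 => obind (fun b => fpow n l (ii a'.+1) (phi n l (ii a'.+1) b) b)
                   (bseqj n l ii b0 a')
  end.

(* i^{(j)}_a for this theorem (independent of j) *)
Definition iseq (n : nat) (j a : nat) : nat :=
  if a <= n.+1 then a.-1 else (2 * n).+1 - a.

Definition unitx (n l a : nat) : elem := setx (zeroB n) a l.
Definition unitxb (n l a : nat) : elem := setxb (zeroB n) a l.

(* Main.v *)
Require Import Defs.
From mathcomp Require Import all_boot.
From mathcomp Require Import zify.
Set Implicit Arguments. Unset Strict Implicit. Unset Printing Implicit Defensive.

Lemma elem_ext (b b' : elem) :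
  size b.1 = size b'.1 -> size b.2 = size b'.2 ->
  (forall k, 0 < k -> xc b k = xc b' k) ->
  (forall k, 0 < k -> xbc b k = xbc b' k) -> b = b'.
Proof.
case: b => s t; case: b' => s' t' /= h1 h2 h3 h4; congr pair.
  apply: (eq_from_nth (x0 := 0)) h1 _ => i _; exact: (h3 i.+1).
apply: (eq_from_nth (x0 := 0)) h2 _ => i _; exact: (h4 i.+1).
Qed.

Lemma xc_setx b i v k : 0 < i -> 0 < k ->
  xc (setx b i v) k = if k == i then v else xc b k.
Proof.
move=> hi hk; rewrite /xc /setx /= nth_set_nth /=.
by case: i hi => // i _; case: k hk => // k _ /=; rewrite ?eqSS.
Qed.

Lemma xbc_setxb b i v k : 0 < i -> 0 < k ->
  xbc (setxb b i v) k = if k == i then v else xbc b k.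
Proof.
move=> hi hk; rewrite /xbc /setxb /= nth_set_nth /=.
by case: i hi => // i _; case: k hk => // k _ /=; rewrite ?eqSS.
Qed.

Lemma xc_setxb b i v k : xc (setxb b i v) k = xc b k.
Proof. by []. Qed.
Lemma xbc_setx b i v k : xbc (setx b i v) k = xbc b k.
Proof. by []. Qed.

Lemma size_setx1 b i v : 0 < i -> size (setx b i v).1 = maxn i (size b.1).
Proof. by case: i => // i _; rewrite /setx /= size_set_nth. Qed.
Lemma size_setx2 b i v : size (setx b i v).2 = size b.2.
Proof. by []. Qed.
Lemma size_setxb1 b i v : size (setxb b i v).1 = size b.1.
Proof. by []. Qed.
Lemma size_setxb2 b i v : 0 < i -> size (setxb b i v).2 = maxn i (size b.2).
Proof. by case: i => // i _; rewrite /setxb /= size_set_nth. Qed.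

Lemma nth_le_sumn (s : seq nat) i : nth 0 s i <= sumn s.
Proof.
elim: s i => [|x s IH] [|i] //=; first by rewrite leq_addr.
by apply: leq_trans (IH i) _; rewrite leq_addl.
Qed.

Lemma xc_le b i : xc b i <= sumn b.1.
Proof. exact: nth_le_sumn. Qed.
Lemma xbc_le b i : xbc b i <= sumn b.2.
Proof. exact: nth_le_sumn. Qed.

Lemma sB_setx b i v : sB (setx b i v) + xc b i = sB b + v.
Proof.
rewrite /sB /setx /xc /= sumn_set_nth0.
have := nth_le_sumn b.1 i.-1; lia.
Qed.

Lemma sB_setxb b i v : sB (setxb b i v) + xbc b i = sB b + v.
Proof.
rewrite /sB /setxb /xbc /= sumn_set_nth0.
have := nth_le_sumn b.2 i.-1; lia.
Qed.

Lemma sB_ge b : sumn b.1 + sumn b.2 = sB b.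
Proof. by []. Qed.

Lemma xc_zero n k : xc (zeroB n) k = 0.
Proof. by rewrite /xc /zeroB /= nth_nseq; case: ifP. Qed.
Lemma xbc_zero n k : xbc (zeroB n) k = 0.
Proof. by rewrite /xbc /zeroB /= nth_nseq; case: ifP. Qed.
Lemma sB_zero n : sB (zeroB n) = 0.
Proof. by rewrite /sB /zeroB /= sumn_nseq. Qed.
Lemma size_zero1 n : size (zeroB n).1 = n.
Proof. by rewrite size_nseq. Qed.
Lemma size_zero2 n : size (zeroB n).2 = n.
Proof. by rewrite size_nseq. Qed.

Ltac caseifs :=
  repeat match goal with
  | |- context[if ?a == ?b then _ else _] =>
      case: (a =P b) => [?|?]; try subst a
  | H : context[if ?a == ?b then _ else _] |- _ =>
      move: H; case: (a =P b) => [?|?] H; try subst a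
  end.

Ltac sumfacts :=
  repeat match goal with
  | |- context[sB (setx ?b ?i ?v)] =>
      lazymatch goal with
      | H : sB (setx b i v) + _ = _ |- _ => fail
      | _ => have := sB_setx b i v; move=> ?
      end
  | |- context[sB (setxb ?b ?i ?v)] =>
      lazymatch goal with
      | H : sB (setxb b i v) + _ = _ |- _ => fail
      | _ => have := sB_setxb b i v; move=> ?
      end
  | H : context[sB (setx ?b ?i ?v)] |- _ =>
      lazymatch goal with
      | H : sB (setx b i v) + _ = _ |- _ => fail
      | _ => have := sB_setx b i v; move=> ?
      end
  | H : context[sB (setxb ?b ?i ?v)] |- _ =>
      lazymatch goal with
      | H : sB (setxb b i v) + _ = _ |- _ => fail
      | _ => have := sB_setxb b i v; move=> ?
      end
  end.

Ltac simpc1 :=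
  first [ rewrite xc_setx; [|lia|lia] | rewrite xbc_setxb; [|lia|lia]
        | rewrite xc_setxb | rewrite xbc_setx
        | rewrite size_setx1; [|lia] | rewrite size_setx2
        | rewrite size_setxb1 | rewrite size_setxb2; [|lia]
        | rewrite xc_zero | rewrite xbc_zero | rewrite sB_zero
        | rewrite size_zero1 | rewrite size_zero2 ].

Ltac revsetx :=
  repeat match goal with
  | H : context[setx _ _ _] |- _ => move: H
  | H : context[setxb _ _ _] |- _ => move: H
  | H : context[zeroB _] |- _ => move: H
  end.

Ltac simpc := revsetx; repeat simpc1; intros.

Ltac crush := sumfacts; simpc; caseifs; try lia.

Lemma inBP n l b : inB n l b <-> [/\ size b.1 = n, size b.2 = n & sB b <= l].
Proof. by rewrite /inB; split => [/and3P[/eqP-> /eqP-> ->]|[-> -> ->]] //; rewrite !eqxx. Qed.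

Lemma ftil_inB n l i b b' : ftil n l i b = Some b' -> inB n l b'.
Proof. by rewrite /ftil; case: fraw => // c; case: ifP => // h [<-]. Qed.

Lemma fpowS n l i k b : fpow n l i k.+1 b = obind (ftil n l i) (fpow n l i k b).
Proof. by []. Qed.

Lemma fpow_inv n l i (Q : elem -> Prop) k b b' :
  (forall c c', Q c -> ftil n l i c = Some c' -> Q c') ->
  Q b -> fpow n l i k b = Some b' -> Q b'.
Proof.
move=> hQ hb; elim: k b' => [|k IH] b'; first by move=> [<-].
rewrite fpowS; case E: (fpow n l i k b) => [c|] //= hc.
exact: hQ (IH _ E) hc.
Qed.

Lemma fpow_chain n l i (g : nat -> elem) k :
  inB n l (g 0) ->
  (forall t, t < k -> inB n l (g t) -> ftil n l i (g t) = Some (g t.+1)) ->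
  fpow n l i k (g 0) = Some (g k).
Proof.
move=> h0 hs; suff: fpow n l i k (g 0) = Some (g k) /\ inB n l (g k) by case.
elim: k hs => [|k IH] hs; first by split.
have [e1 e2] := IH (fun t ht => hs t (ltnW ht)).
rewrite fpowS e1 /= (hs k) //; split => //; exact: ftil_inB (hs k _ e2).
Qed.

Lemma fpow_add n l i k1 k2 b :
  fpow n l i (k1 + k2) b = obind (fpow n l i k2) (fpow n l i k1 b).
Proof.
elim: k2 => [|k IH]; first by rewrite addn0; case: fpow.
rewrite addnS fpowS IH; case: (fpow n l i k1 b) => //= c.
Qed.

Section Steps.
Variables (n l : nat) (b : elem).
Hypothesis hb : inB n l b.

Lemma S0a : 0 < n -> xbc b 1 <= xc b 1 -> sB b < l ->
  ftil n l 0 b = Some (setx b 1 (xc b 1).+1).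
Proof.
move: hb => /inBP[h1 h2 h3] hn c1 c2.
rewrite /ftil /fraw eqxx c1; case: ifP => //; move/negP; apply: absurd.
apply/inBP; split; crush.
Qed.

Lemma S0b : 0 < n -> xc b 1 < xbc b 1 ->
  ftil n l 0 b = Some (setxb b 1 (xbc b 1).-1).
Proof.
move: hb => /inBP[h1 h2 h3] hn c1.
rewrite /ftil /fraw eqxx leqNgt c1; case: ifP => //; move/negP; apply: absurd.
apply/inBP; split; crush.
Qed.

Lemma S1a i : 0 < i < n -> xbc b i.+1 <= xc b i.+1 -> 0 < xc b i ->
  ftil n l i b = Some (setx (setx b i (xc b i).-1) i.+1 (xc b i.+1).+1).
Proof.
move: hb => /inBP[h1 h2 h3] /andP[hi hin] c1 c2.
have e1 : (i == 0) = false by lia.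
have e2 : (xc b i == 0) = false by lia.
rewrite /ftil /fraw e1 hin c1 e2.
case: ifP => //; move/negP; apply: absurd.
apply/inBP; split; crush.
Qed.

Lemma S1b i : 0 < i < n -> xc b i.+1 < xbc b i.+1 ->
  ftil n l i b = Some (setxb (setxb b i.+1 (xbc b i.+1).-1) i (xbc b i).+1).
Proof.
move: hb => /inBP[h1 h2 h3] /andP[hi hin] c1.
have e1 : (i == 0) = false by lia.
have e2 : (xbc b i.+1 == 0) = false by lia.
have e3 : (xbc b i.+1 <= xc b i.+1) = false by lia.
rewrite /ftil /fraw e1 hin e3 e2.
case: ifP => //; move/negP; apply: absurd.
apply/inBP; split; crush.
Qed.

Lemma Sn : 0 < n -> 0 < xc b n ->
  ftil n l n b = Some (setxb (setx b n (xc b n).-1) n (xbc b n).+1).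
Proof.
move: hb => /inBP[h1 h2 h3] hn c1.
have e1 : (n == 0) = false by lia.
have e2 : (xc b n == 0) = false by lia.
rewrite /ftil /fraw e1 ltnn eqxx e2.
case: ifP => //; move/negP; apply: absurd.
apply/inBP; split; crush.
Qed.

End Steps.

Ltac extc := apply: elem_ext => *; crush.

Section Chains.
Variables (n l : nat) (b : elem).
Hypothesis hb : inB n l b.
Hypothesis hn : 0 < n.

Lemma C0 c : xbc b 1 <= xc b 1 -> sB b + c <= l ->
  fpow n l 0 c b = Some (setx b 1 (xc b 1 + c)).
Proof.
move: (hb) => /inBP[h1 h2 h3] c1 c2.
pose g t := setx b 1 (xc b 1 + t).
have e0 : g 0 = b by rewrite /g; extc.
suff: fpow n l 0 c (g 0) = Some (g c) by rewrite e0.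
apply: fpow_chain; first by rewrite e0.
move=> t ht hg; rewrite S0a //; last by rewrite /g; crush.
  by congr Some; rewrite /g; extc.
by rewrite /g; crush.
Qed.

Lemma C0' c : xc b 1 + c <= xbc b 1 ->
  fpow n l 0 c b = Some (setxb b 1 (xbc b 1 - c)).
Proof.
move: (hb) => /inBP[h1 h2 h3] c1.
pose g t := setxb b 1 (xbc b 1 - t).
have e0 : g 0 = b by rewrite /g; extc.
suff: fpow n l 0 c (g 0) = Some (g c) by rewrite e0.
apply: fpow_chain; first by rewrite e0.
move=> t ht hg; rewrite S0b //; last by rewrite /g; crush.
by congr Some; rewrite /g; extc.
Qed.

Lemma C1 i c : 0 < i < n -> (0 < c -> xbc b i.+1 <= xc b i.+1) -> c <= xc b i ->
  fpow n l i c b = Some (setx (setx b i (xc b i - c)) i.+1 (xc b i.+1 + c)).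
Proof.
move: (hb) => /inBP[h1 h2 h3] /andP[hi hin] c1 c2.
pose g t := setx (setx b i (xc b i - t)) i.+1 (xc b i.+1 + t).
have e0 : g 0 = b by rewrite /g; extc.
suff: fpow n l i c (g 0) = Some (g c) by rewrite e0.
apply: fpow_chain; first by rewrite e0.
move=> t ht hg; have c1' := c1 (leq_ltn_trans (leq0n t) ht).
rewrite S1a //; first (by congr Some; rewrite /g; extc); rewrite /g; crush.
Qed.

Lemma C1' i c : 0 < i < n -> xc b i.+1 + c <= xbc b i.+1 ->
  fpow n l i c b = Some (setxb (setxb b i.+1 (xbc b i.+1 - c)) i (xbc b i + c)).
Proof.
move: (hb) => /inBP[h1 h2 h3] /andP[hi hin] c1.
pose g t := setxb (setxb b i.+1 (xbc b i.+1 - t)) i (xbc b i + t).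
have e0 : g 0 = b by rewrite /g; extc.
suff: fpow n l i c (g 0) = Some (g c) by rewrite e0.
apply: fpow_chain; first by rewrite e0.
move=> t ht hg.
rewrite S1b //; first (by congr Some; rewrite /g; extc); rewrite /g; crush.
Qed.

Lemma Cn c : c <= xc b n ->
  fpow n l n c b = Some (setxb (setx b n (xc b n - c)) n (xbc b n + c)).
Proof.
move: (hb) => /inBP[h1 h2 h3] c1.
pose g t := setxb (setx b n (xc b n - t)) n (xbc b n + t).
have e0 : g 0 = b by rewrite /g; extc.
suff: fpow n l n c (g 0) = Some (g c) by rewrite e0.
apply: fpow_chain; first by rewrite e0.
move=> t ht hg.
rewrite Sn //; first (by congr Some; rewrite /g; extc); rewrite /g; crush.
Qed.

End Chains.

Lemma ftil_frame n l i b b' : ftil n l i b = Some b' ->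
  forall k, 0 < k -> k != i -> k != i.+1 -> xc b' k = xc b k /\ xbc b' k = xbc b k.
Proof.
rewrite /ftil; case E: fraw => [c|] //; case: ifP => // _ [<-] k hk h1 h2.
move: E; rewrite /fraw; case: (i =P 0) => [e0|ne0].
  subst i; case: ifP => _ [<-]; split; crush.
case: ifP => hin.
  have hi : 0 < i by lia.
  case: ifP => _; case: ifP => _ // [<-]; split; crush.
case: (i =P n) => [en|] //; subst i; case: ifP => _ // [<-]; split; crush.
Qed.

Lemma ftil_xbfree n l i b b' : i < n -> xbc b i.+1 = 0 -> ftil n l i b = Some b' ->
  b'.2 = b.2.
Proof.
move=> hin h0; rewrite /ftil; case E: fraw => [c|] //; case: ifP => // _ [<-].
move: E; rewrite /fraw hin; case: (i =P 0) => [e0|ne0].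
  by subst i; rewrite h0 leq0n => -[<-].
by rewrite h0 leq0n; case: ifP => // _ [<-].
Qed.

Lemma fpow_inB n l i k b b' : inB n l b -> fpow n l i k b = Some b' -> inB n l b'.
Proof. by move=> hb; apply: (fpow_inv (Q := inB n l)) hb => c c' _; exact: ftil_inB. Qed.

Lemma xc_out n l b k : inB n l b -> n < k -> xc b k = 0.
Proof. by move=> /inBP[h1 _ _] hk; rewrite /xc nth_default // h1; lia. Qed.
Lemma xbc_out n l b k : inB n l b -> n < k -> xbc b k = 0.
Proof. by move=> /inBP[_ h1 _] hk; rewrite /xbc nth_default // h1; lia. Qed.

Definition Pset n l a b : Prop :=
  if a == 0 then b = zeroB n
  else if a <= n then inB n l b /\ (forall k, a < k <= n -> xc b k = 0) /\
                      (forall k, 1 <= k <= n -> xbc b k = 0)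
  else inB n l b /\ (forall k, 1 <= k <= 2 * n - a -> xbc b k = 0).

Lemma inB_zero n l : inB n l (zeroB n).
Proof. apply/inBP; split; crush. Qed.

Section Sets.
Variables (n l j : nat).
Hypothesis hn : 2 <= n.
Hypothesis hl : 1 <= l.

Lemma Pmono a b : a < 2 * n -> Pset n l a b -> Pset n l a.+1 b.
Proof.
rewrite /Pset => ha; case: (a =P 0) => [->|a0].
  move=> ->; rewrite /= (_ : 1 <= n) //; last lia.
  split; first exact: inB_zero.
  by split => k _; rewrite ?xc_zero ?xbc_zero.
case: ifP => han.
  move=> [h1 [h2 h3]]; case: ifP => han1.
    split => //; split => // k hk; apply: h2; lia.
  split => // k hk; apply: h3; lia.
move=> [h1 h2]; have ->: (a.+1 <= n) = false by lia.
split => // k hk; apply: h2; lia.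
Qed.

Lemma iseq_val a : iseq n j a = if a <= n.+1 then a.-1 else (2 * n).+1 - a.
Proof. by []. Qed.

Lemma Pinv a c c' : a < 2 * n -> Pset n l a.+1 c ->
  ftil n l (iseq n j a.+1) c = Some c' -> Pset n l a.+1 c'.
Proof.
move=> ha; rewrite /Pset iseq_val /= => hP hf.
have hc' := ftil_inB hf.
case: ifP hP hf => han.
  move=> [h1 [h2 h3]]; have ->: (a.+1 <= n.+1) = true by lia. rewrite /=.
  move=> hf.
  have e2 : c'.2 = c.2 by apply: (ftil_xbfree _ _ hf); [lia | apply: h3; lia].
  split => //; split => k hk.
    rewrite (proj1 (ftil_frame hf _ _ _)); [apply: h2 | | |]; lia.
  by rewrite /xbc e2; apply: h3.
move=> [h1 h2] hf; split => // k hk.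
rewrite (proj2 (ftil_frame hf _ _ _)); [apply: h2 | | |]; move: hf; case: ifP; lia.
Qed.

Lemma Pcomp a b : a < 2 * n -> Pset n l a.+1 b ->
  exists b' k, Pset n l a b' /\ fpow n l (iseq n j a.+1) k b' = Some b.
Proof.
move=> ha; rewrite /Pset iseq_val /= => hP.
have hn0 : 0 < n by lia.
case: (a =P 0) => [a0|a0].
  subst a; move: hP; have ->: (1 <= n) = true by lia.
  move=> [h1 [h2 h3]]; move: (h1) => /inBP[s1 s2 s3].
  exists (zeroB n), (xc b 1); split => //.
  rewrite C0; try solve [exact: inB_zero | lia | by rewrite xc_zero xbc_zero
     | have := xc_le b 1; have := sB_ge b; rewrite sB_zero; lia].
  congr Some; apply: elem_ext; [crush|crush| move=> k hk; crush | move=> k hk; crush].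
    case: (leqP k n) => hk'; [rewrite h2 //; lia | by rewrite (xc_out h1)].
  case: (leqP k n) => hk'; [rewrite h3 //; lia | by rewrite (xbc_out h1)].
case: ifP hP => han.
  move=> [h1 [h2 h3]]; move: (h1) => /inBP[s1 s2 s3].
  have ->: (a.+1 <= n.+1) = true by lia. rewrite /=.
  have han' : a < n by lia.
  pose b' := setx (setx b a (xc b a + xc b a.+1)) a.+1 0.
  have hb' : inB n l b'.
    apply/inBP; rewrite /b'; split; crush.
  exists b', (xc b a.+1); split.
    have ->: (a <= n) = true by lia.
    split => //; split => k hk; rewrite /b'; crush; apply: h2 || apply: h3; lia.
  rewrite C1; try solve [done | lia | rewrite /b'; crush
                      | move=> _; rewrite /b'; crush; rewrite h3; lia].
  congr Some; apply: elem_ext => *; rewrite /b'; crush.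
move=> [h1 h2]; move: (h1) => /inBP[s1 s2 s3].
case: (a =P n) => [an|an].
  subst a; rewrite !leqnn /=.
  pose b' := setxb (setx b n (xc b n + xbc b n)) n 0.
  have hb' : inB n l b'.
    apply/inBP; rewrite /b'; split; crush.
  exists b', (xbc b n); split.
    split => //; split => k hk; rewrite /b'; crush.
    apply: h2; lia.
  rewrite Cn //; last by rewrite /b'; crush.
  congr Some; apply: elem_ext => *; rewrite /b'; crush.
have ->: (a.+1 <= n.+1) = false by lia.
have ->: (a <= n) = false by lia.
set i := (2 * n).+1 - a.+1.
have hi : 0 < i < n by rewrite /i; lia.
have hi' : 0 < i by lia.
have e2 : 2 * n - a = i by rewrite /i; lia.
pose x := xc b i; pose p := xc b i.+1; pose q := xbc b i.+1; pose m := xbc b i.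
pose b' := setxb (setxb (setx (setx b i (x + (p - q))) i.+1 (p - (p - q))) i.+1 (q + m)) i 0.
have hb' : inB n l b'.
  apply/inBP; rewrite /b' /x /p /q /m; split; crush.
exists b', (m + (p - q)); split.
  split => //; rewrite e2 => k hk; rewrite /b'; crush.
  apply: h2; lia.
rewrite fpow_add C1' //; last by rewrite /b' /x /p /q /m; crush.
set b'' := setxb _ _ _.
have hb'' : inB n l b''.
  by apply: (fpow_inB (i := i) (k := m) hb'); rewrite C1' //; rewrite /b' /x /p /q /m; crush.
rewrite /= C1 //; [| rewrite /b'' /b' /x /p /q /m; crush
                   | rewrite /b'' /b' /x /p /q /m; crush].
congr Some; apply: elem_ext => *; rewrite /b'' /b' /x /p /q /m; crush.
Qed.

End Sets.

Lemma bseqS n l ii b0 a : bseqj n l ii b0 a.+1 =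
  obind (fun b => fpow n l (ii a.+1) (phi n l (ii a.+1) b) b) (bseqj n l ii b0 a).
Proof. by []. Qed.
Lemma obind_Some (f : elem -> option elem) x : obind f (Some x) = f x.
Proof. by []. Qed.
Lemma iseq_lo n j a : a <= n.+1 -> iseq n j a = a.-1.
Proof. by rewrite /iseq => ->. Qed.
Lemma iseq_hi n j a : n.+1 < a -> iseq n j a = (2 * n).+1 - a.
Proof. by rewrite /iseq => h; have ->: (a <= n.+1) = false by lia. Qed.

Section Main.
Variables (n l j : nat).
Hypothesis hn : 2 <= n.
Hypothesis hl : 1 <= l.

Lemma Bset_P a b : a <= 2 * n ->
  Bset n l (iseq n j) (zeroB n) a b <-> Pset n l a b.
Proof.
elim: a b => [|a IH] b ha; first by [].
have ha' : a < 2 * n by lia.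
split.
  move=> [b' [k [hB hf]]].
  have hP := Pmono hn hl ha' ((IH b' (ltnW ha')).1 hB).
  apply: (fpow_inv (Q := Pset n l a.+1)) hP hf => c c' hc hc'.
  exact: (Pinv hn hl ha' hc hc').
move=> hP; have [b' [k [h1 h2]]] := Pcomp j hn hl ha' hP.
by exists b', k; split => //; apply/(IH b' (ltnW ha')).
Qed.

Lemma inB_unitx a : 0 < a <= n -> inB n l (unitx n l a).
Proof. move=> /andP[h1 h2]; apply/inBP; rewrite /unitx; split; crush. Qed.
Lemma inB_unitxb a : 0 < a <= n -> inB n l (unitxb n l a).
Proof. move=> /andP[h1 h2]; apply/inBP; rewrite /unitxb; split; crush. Qed.

Lemma bsA a : 1 <= a <= n ->
  bseqj n l (iseq n j) (zeroB n) a = Some (unitx n l a).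
Proof.
elim: a => [|a IH] ha; first by lia.
rewrite bseqS; case: (a =P 0) => [a0|a0].
  subst a; rewrite obind_Some iseq_lo; last lia.
  have -> : phi n l 0 (zeroB n) = l.
    by rewrite /phi eqxx xc_zero xbc_zero sB_zero; lia.
  rewrite C0; try solve [exact: inB_zero | lia | by rewrite xc_zero xbc_zero | rewrite sB_zero; lia].
  by congr Some; rewrite /unitx xc_zero.
rewrite IH; last lia.
rewrite obind_Some iseq_lo; last lia.
have hb := @inB_unitx a.
have ha0 : 0 < a by lia.
have -> : phi n l a.+1.-1 (unitx n l a) = l.
  rewrite /phi /=; have -> : (a == 0) = false by lia.
  have -> : (a < n) = true by lia.
  rewrite /unitx; crush.
rewrite C1; try solve [lia | apply: hb; lia | rewrite /unitx; crush | move=> _; rewrite /unitx; crush].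
congr Some; apply: elem_ext => *; rewrite /unitx; crush.
Qed.

Lemma bsB a : 1 <= a <= n ->
  bseqj n l (iseq n j) (zeroB n) (n + a) = Some (unitxb n l (n - a).+1).
Proof.
elim: a => [|a IH] ha; first by lia.
rewrite addnS bseqS; case: (a =P 0) => [a0|a0].
  subst a; rewrite addn0 bsA; last lia.
  rewrite obind_Some iseq_lo; last lia.
  have hb := @inB_unitx n.
  have -> : phi n l n.+1.-1 (unitx n l n) = l.
    rewrite /phi /=; have -> : (n == 0) = false by lia.
    rewrite ltnn eqxx /unitx; crush.
  rewrite Cn; try solve [lia | apply: hb; lia | rewrite /unitx; crush].
  congr Some; apply: elem_ext => *; rewrite /unitx /unitxb; crush.
rewrite IH; last lia.
rewrite obind_Some iseq_hi; last lia.
have -> : (2 * n).+1 - (n + a).+1 = n - a by lia.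
have hb := @inB_unitxb (n - a).+1.
have hi : 0 < n - a by lia.
have -> : phi n l (n - a) (unitxb n l (n - a).+1) = l.
  rewrite /phi; have -> : (n - a == 0) = false by lia.
  have -> : (n - a < n) = true by lia.
  rewrite /unitxb; crush.
rewrite C1'; try solve [lia | apply: hb; lia | rewrite /unitxb; crush].
congr Some; apply: elem_ext => *; rewrite /unitxb; crush.
Qed.

End Main.
Unset Implicit Arguments.
Theorem mainTheorem6 (n l : nat) (hn : 2 <= n) (hl : 1 <= l) :
  let d := 2 * n in
  let ii := iseq n in
  let lam := fun (j i : nat) => lamcoef l i in
  let bbar := fun (j : nat) => zeroB n in
  let Bs := fun j a b => Bset n l (ii j) (bbar j) a b in
  let bs := fun j a => bseqj n l (ii j) (bbar j) a in
  let inext := fun j a => if a < d then ii j a.+1 else ii j.+1 1 in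
  (* (II) *)
  (forall j, 1 <= j -> forall b, Bs j d b <-> inB n l b) /\
  (* (III) *)
  (forall j, 1 <= j -> forall a, 1 <= a <= d -> forall b, Bs j a.-1 b ->
     lam j (ii j a) <= eps n l (ii j a) b) /\
  (* (IV') *)
  (forall j, 1 <= j -> forall a, 1 <= a <= d ->
     exists b, bs j a = Some b /\
       eps n l (inext j a) b = 0 /\ 0 < phi n l (inext j a) b) /\
  (forall j, 1 <= j ->
     bs j.+1 0 = obind (fpow n l (ii j.+1 1) (lam j.+1 (ii j.+1 1))) (bs j d)) /\
  (* explicit description of the B^{(j)}_a *)
  (forall j, 1 <= j -> forall b, Bs j 0 b <-> b = zeroB n) /\
  (forall j, 1 <= j -> forall a, 1 <= a <= n -> forall b,
     Bs j a b <-> (inB n l b /\ (forall k, a < k <= n -> xc b k = 0) /\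
                   (forall k, 1 <= k <= n -> xbc b k = 0))) /\
  (forall j, 1 <= j -> forall a, 1 <= a <= n.-1 -> forall b,
     Bs j (n + a) b <-> (inB n l b /\ (forall k, 1 <= k <= n - a -> xbc b k = 0))) /\
  (* explicit description of the b^{(j)}_a *)
  (forall j, 1 <= j -> bs j 0 = Some (zeroB n)) /\
  (forall j, 1 <= j -> forall a, 1 <= a <= n -> bs j a = Some (unitx n l a)) /\
  (forall j, 1 <= j -> forall a, 1 <= a <= n ->
     bs j (n + a) = Some (unitxb n l (n - a).+1)).
Proof.
cbv zeta beta.
have hn0 : 0 < n by lia.
split.
  move=> j _ b. apply: (iff_trans (@Bset_P n l j hn hl _ b _)); first lia.
  rewrite /Pset; have ->: (2 * n == 0) = false by lia.
  have ->: (2 * n <= n) = false by lia.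
  split => [[]//|h]; split => // k; lia.
split.
  move=> j _ a ha b hb; rewrite /lamcoef; case: (a =P 1) => [a1|a1].
    subst a; have -> : b = zeroB n by exact: hb.
    have -> : iseq n j 1 = 0 by [].
    rewrite eqxx /eps eqxx xc_zero xbc_zero sB_zero; lia.
  by have -> : (iseq n j a == 0) = false by rewrite /iseq; case: ifP; lia.
split.
  move=> j _ a ha; case: (leqP a n) => han.
    exists (unitx n l a); split; first by apply: bsA; lia.
    have -> : (a < 2 * n) = true by lia.
    rewrite iseq_lo; last lia.
    have ha0 : 0 < a by lia.
    case: (a =P n) => [an|an].
      subst a; rewrite /eps /phi /=; have -> : (n == 0) = false by lia.
      rewrite ltnn eqxx /unitx; split; crush.
    rewrite /eps /phi /=; have -> : (a == 0) = false by lia.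
    have -> : (a < n) = true by lia.
    rewrite /unitx; split; crush.
  have ea : a = n + (a - n) by lia.
  exists (unitxb n l (n - (a - n)).+1); split; first by rewrite {1}ea; apply: bsB; lia.
  case: (a =P 2 * n) => [a2|a2].
    have -> : (a < 2 * n) = false by lia.
    have -> : iseq n j.+1 1 = 0 by [].
    have -> : (n - (a - n)).+1 = 1 by lia.
    rewrite /eps /phi eqxx /unitxb; split; crush.
  have -> : (a < 2 * n) = true by lia.
  rewrite iseq_hi; last lia.
  have -> : (2 * n).+1 - a.+1 = n - (a - n) by lia.
  have hi : 0 < n - (a - n) by lia.
  rewrite /eps /phi; have -> : (n - (a - n) == 0) = false by lia.
  have -> : (n - (a - n) < n) = true by lia.
  rewrite /unitxb; split; crush.
split.
  move=> j _; have -> : 2 * n = n + n by lia.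
  rewrite (@bsB n l j hn hl n); last lia.
  rewrite obind_Some subnn.
  have -> : iseq n j.+1 1 = 0 by [].
  rewrite /lamcoef eqxx C0'; try solve [lia | apply: inB_unitxb; lia | rewrite /unitxb; crush].
  congr Some; apply: elem_ext => *; rewrite /unitxb; crush.
split.
  by move=> j _ b; exact: iff_refl.
split.
  move=> j _ a ha b; apply: (iff_trans (@Bset_P n l j hn hl _ b _)); first lia.
  rewrite /Pset; have ->: (a == 0) = false by lia.
  have ->: (a <= n) = true by lia.
  exact: iff_refl.
split.
  move=> j _ a ha b; apply: (iff_trans (@Bset_P n l j hn hl _ b _)); first lia.
  rewrite /Pset; have ->: (n + a == 0) = false by lia.
  have ->: (n + a <= n) = false by lia.
  have ->: 2 * n - (n + a) = n - a by lia.
  exact: iff_refl.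
split.
  by [].
split.
  move=> j _ a ha; apply: bsA; lia.
move=> j _ a ha; apply: bsB; lia.
Qed.
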